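(* Let $k$ be an odd integer with $k\ge5$, and let $n>k$ be a positive integer with $n\equiv (k+1)/2\pmod k$. Then $\mathrm{msum}(n,k)>1$.
   Context: Let $n,k$ be positive integers with $n>k$ and let $S_n$ be the set of permutations $\pi=(\pi_1,\dots,\pi_n)$ of $1,\dots,n$. Indices are taken cyclically: $\pi_{n+i}=\pi_i$. The $k$-consecutive sums of $\pi$ are $s_i=\sum_{j=0}^{k-1}\pi_{i+j}$ for $i=1,\dots,n$. Define $\mathrm{msum}(\pi,k)=\max\{s_i: 1\le i\le n\}-\frac{k(n+1)}{2}$ and $\mathrm{msum}(n,k)=\min\{\mathrm{msum}(\pi,k):\pi\in S_n\}$. *)

(* Defs.v *)
From mathcomp Require Import all_boot all_order all_fingroup all_algebra.
Set Implicit Arguments. Unset Strict Implicit. Unset Printing Implicit Defensive.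
Import GRing.Theory Num.Theory.

(* A permutation pi of {1,...,n} is represented by s : {perm 'I_n};
   pi_{i+1} = s i + 1 for i : 'I_n (0-based positions, values shifted by 1).
   pival s m = pi at 0-based cyclic position m (taken mod n). *)

Definition pival (n : nat) (s : {perm 'I_n}) (m : nat) : nat :=
  nth 0 [seq (s i).+1 | i <- enum 'I_n] (m %% n).

Definition ksum (n k : nat) (s : {perm 'I_n}) (i : 'I_n) : nat :=
  \sum_(j < k) pival s (i + j).

Definition maxksum (n k : nat) (s : {perm 'I_n}) : nat :=
  \max_(i : 'I_n) ksum k s i.

Definition msum_perm (n k : nat) (s : {perm 'I_n}) : rat :=
  (maxksum k s)%:R - (k * (n + 1))%:R / 2%:R.

(* msum(n,k) = min over all permutations of msum(pi,k).
   The min of maxksum over the (nonempty) set of permutations; the index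
   value maxksum k 1 is itself attained, so it does not affect the min. *)
Definition msum (n k : nat) : rat :=
  (\big[minn/maxksum k (1 : {perm 'I_n})]_(s : {perm 'I_n}) maxksum k s)%:R
  - (k * (n + 1))%:R / 2%:R.

(* Main.v *)
Require Import Defs.
From mathcomp Require Import all_boot all_order all_fingroup all_algebra.
From mathcomp Require Import zify ring lra.
Import GRing.Theory Num.Theory.

Lemma pivalE n (s : {perm 'I_n}) (j : 'I_n) : pival s j = (s j).+1.
Proof.
by rewrite /pival modn_small // (nth_map j) ?size_enum_ord // nth_ord_enum.
Qed.

Lemma pival_modn n (s : {perm 'I_n}) m : pival s (m %% n) = pival s m.
Proof. by rewrite /pival modn_mod. Qed.

Lemma pival_addn n (s : {perm 'I_n}) m : pival s (m + n) = pival s m.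
Proof. by rewrite /pival modnDr. Qed.

Lemma sum_succ n : (\sum_(j < n) (j : nat).+1).*2 = n * n.+1.
Proof.
elim: n => [|n IH]; first by rewrite big_ord0.
rewrite big_ord_recr /= doubleD IH; lia.
Qed.

Lemma sum_period n (s : {perm 'I_n}) a : 0 < n ->
  (\sum_(j < n) pival s (a + j)).*2 = n * n.+1.
Proof.
move=> n0.
have inj : injective (fun j : 'I_n => Ordinal (ltn_pmod (a + j) n0)).
  move=> x y /(congr1 val) /= /eqP; rewrite eqn_modDl !modn_small // => /eqP.
  exact: val_inj.
transitivity (\sum_(j < n) pival s (Ordinal (ltn_pmod (a + j) n0))).*2.
  by congr (_.*2); apply: eq_bigr => j _ /=; rewrite pival_modn.
have -> : \sum_(j < n) pival s (Ordinal (ltn_pmod (a + j) n0)) =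
  \sum_(j < n) pival s j by rewrite [RHS](reindex_inj inj).
transitivity (\sum_(j < n) (s j : nat).+1).*2.
  by congr (_.*2); apply: eq_bigr => j _; rewrite pivalE.
have := reindex_inj (F := fun j : 'I_n => (j : nat).+1) (P := xpredT) (@perm_inj _ s).
  by move=> /= <-; rewrite sum_succ.
Qed.

Lemma split_sum (F : nat -> nat) x a b :
  \sum_(j < a + b) F (x + j) = \sum_(j < a) F (x + j) + \sum_(j < b) F (x + a + j).
Proof.
by rewrite big_split_ord /=; congr (_ + _); apply: eq_bigr => j _; rewrite addnA.
Qed.

Lemma blocks (F : nat -> nat) x r k q :
  \sum_(j < r + q * k) F (x + j) =
  \sum_(j < r) F (x + j) + \sum_(l < q) \sum_(j < k) F (x + r + l * k + j).
Proof.
elim: q => [|q IH]; first by rewrite mul0n addn0 big_ord0 addn0.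
rewrite mulSn (addnC k) addnA split_sum IH big_ord_recr /= addnA.
by rewrite addnA.
Qed.

Lemma window n k (s : {perm 'I_n}) x : 0 < n ->
  \sum_(j < k) pival s (x + j) <= maxksum k s.
Proof.
move=> n0.
have := @leq_bigmax _ (fun i : 'I_n => ksum k s i) (Ordinal (ltn_pmod x n0)).
rewrite /ksum /=.
suff -> : \sum_(j < k) pival s (x %% n + j) = \sum_(j < k) pival s (x + j) by [].
by apply: eq_bigr => j _; rewrite -pival_modn modnDml pival_modn.
Qed.

Lemma main_bound n k q r (s : {perm 'I_n}) :
  n = q * k + r -> k.+1 = 2 * r -> 1 <= q -> 5 <= k ->
  k * n.+1 + 3 <= 2 * maxksum k s.
Proof.
move=> hn hk hq hk5.
have n0 : 0 < n by lia.
set M := maxksum k s.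
pose p := (s^-1)%g (Ordinal n0).
have fp : pival s p = 1 by rewrite pivalE permKV.
pose x := p + n - (r - 1).
have hxy : x + (r - 1) = p + n by rewrite /x; lia.
have hn' : n = r + q * k by lia.
have tb : forall y, n * n.+1 <= (\sum_(j < r) pival s (y + j)).*2 + (q * M).*2.
  move=> y; rewrite -(@sum_period n s y n0) -doubleD leq_double.
  have := blocks (pival s) y r k q; rewrite -hn' => ->; rewrite leq_add2l.
  rewrite -[q in q * M](card_ord q) -sum_nat_const; apply: leq_sum => l _.
  exact: window.
have hW : \sum_(j < k) pival s (x + j) + 1 =
   \sum_(j < r) pival s (x + j) + \sum_(j < r) pival s (x + (r - 1) + j).
  move: hxy; case: (r) hk => [|r'] hk' hxy'; first by lia.
  have -> : k = r'.+1 + r' by lia.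
  rewrite subn1 /= in hxy'; rewrite subn1 /= split_sum hxy'.
  rewrite [\sum_(j < r'.+1) pival s (p + n + j)]big_ord_recl /= addn0 pival_addn fp.
  have -> : \sum_(i < r') pival s (p + n + bump 0 i) =
            \sum_(i < r') pival s (x + r'.+1 + i).
    by apply: eq_bigr => i _; rewrite /bump /=; congr (pival s _); lia.
  rewrite big_ord_recl /= addn0.
  lia.
have hWM := @window n k s x n0.
have t1 := tb x.
have t2 := tb (x + (r - 1)).
have key : n * n.+1 <= (2 * q + 1) * M + 1 by lia.
rewrite leqNgt; apply/negP => hc.
have hc' : 2 * M <= k * n.+1 + 2 by lia.
have := leq_mul (leqnn (2 * q + 1)) hc'.
have e : (2 * q + 1) * k + 1 = 2 * n by lia.
nia.
Qed.

Theorem theorem1p3 (k n : nat) :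
  odd k -> 5 <= k -> k < n -> n = (k.+1 %/ 2) %[mod k] ->
  (1 < msum n k)%R.
Proof.
move=> hodd hk5 hkn hmod.
set r := k.+1 %/ 2.
have hk : k.+1 = 2 * r.
  have := odd_double_half k; rewrite hodd /r => h; lia.
have hr : r < k by lia.
have hnm : n %% k = r by rewrite hmod modn_small.
set q := n %/ k.
have hn : n = q * k + r by rewrite {1}(divn_eq n k) hnm.
have hq : 1 <= q.
  case: q hn => [|q'] hn'; last by [].
  lia.
set m := \big[minn/maxksum k (1 : {perm 'I_n})]_(s : {perm 'I_n}) maxksum k s.
have hm : k * n.+1 + 3 <= 2 * m.
  rewrite /m; apply: (big_ind (fun x => k * n.+1 + 3 <= 2 * x)).
  - exact: main_bound hn hk hq hk5.
  - move=> a b ha hb; rewrite /minn; case: ifP => _ //.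
  - move=> s _; exact: main_bound hn hk hq hk5.
rewrite /msum -/m.
have : ((k * n.+1 + 3)%:R <= (2 * m)%:R :> rat)%R by rewrite ler_nat.
rewrite addn1 !natrD !natrM.
move=> h.
have e : (2%:R : rat) = 2%R by [].
rewrite e in h *.
lra.
Qed.
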